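(* Let $r\ge 0$ be a fixed integer. There is a constant $C>0$ (depending only on $r$) such that every $r$-cross-free hypergraph $H$ on $n$ vertices has at most $C n^{r+1}$ hyperedges (i.e. $\mathcal O(n^{r+1})$ hyperedges).
   Context: Hypergraphs have vertex set $V=[n]$ and are identified with their sets of hyperedges; $\overline A = V\setminus A$. $\mathcal K_r(n)$ is the class of hypergraphs $\mathcal E$ on $V$ satisfying: (R0) every $X\subseteq V$ with $|X|\le r$ is in $\mathcal E$; (R1) $A\in\mathcal E\Rightarrow V\setminus A\in\mathcal E$; (R2) $A,B\in\mathcal E$ and $|A\cap B|\ge r\Rightarrow A\cup B\in\mathcal E$. $\mathcal K^0_r(n)$ is the class of hypergraphs satisfying (R0) and (R1) only. For a hypergraph $H$ on $V$, $\mathrm{cl}_r(H)$ (resp. $\mathrm{cl}^0_r(H)$) is the intersection of all hypergraphs in $\mathcal K_r(n)$ (resp. $\mathcal K^0_r(n)$) containing $H$. Two sets $A,B\subseteq V$ are $r$-orthogonal if $\mathrm{cl}_r(\{A,B\})=\mathrm{cl}^0_r(\{A,B\})$, where $\{A,B\}$ is the hypergraph on $V$ with hyperedges $A$ and $B$. A hypergraph is $r$-cross-free if every pair of its hyperedges is $r$-orthogonal. *)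

(* Defs.v *)
(* Vertex set V = [n] is rendered as 'I_n; a hypergraph on V
   is a set of hyperedges, i.e. an element of {set {set 'I_n}}. *)
From mathcomp Require Import all_boot.
Set Implicit Arguments. Unset Strict Implicit. Unset Printing Implicit Defensive.

Section Hyper.
Variable n : nat.
Notation hgraph := {set {set 'I_n}}.

Definition R0 (r : nat) (E : hgraph) : bool :=
  [forall X : {set 'I_n}, (#|X| <= r) ==> (X \in E)].
Definition R1 (E : hgraph) : bool :=
  [forall A in E, ~: A \in E].
Definition R2 (r : nat) (E : hgraph) : bool :=
  [forall A in E, forall B in E, (r <= #|A :&: B|) ==> (A :|: B \in E)].

Definition inK (r : nat) (E : hgraph) : bool := [&& R0 r E, R1 E & R2 r E].
Definition inK0 (r : nat) (E : hgraph) : bool := R0 r E && R1 E.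

Definition cl (r : nat) (H : hgraph) : hgraph :=
  [set A | [forall E : hgraph, (inK r E && (H \subset E)) ==> (A \in E)]].
Definition cl0 (r : nat) (H : hgraph) : hgraph :=
  [set A | [forall E : hgraph, (inK0 r E && (H \subset E)) ==> (A \in E)]].

Definition orthogonal (r : nat) (A B : {set 'I_n}) : Prop :=
  cl r [set A; B] = cl0 r [set A; B].

Definition cross_free (r : nat) (H : hgraph) : Prop :=
  forall A B, A \in H -> B \in H -> A != B -> orthogonal r A B.
End Hyper.

(* Main.v *)
Require Import Defs.
From mathcomp Require Import all_boot zify.
Set Implicit Arguments. Unset Strict Implicit. Unset Printing Implicit Defensive.

Lemma in4 (T : finType) (X A B C D : {set T}) :
  X \in [set A; B; C; D] -> [\/ X = A, X = B, X = C | X = D].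
Proof.
rewrite !inE => /orP[/orP[/orP[]|]|] /eqP ->; by [constructor 1|constructor 2|constructor 3|constructor 4].
Qed.

Lemma union_in_cl n r (A B P Q : {set 'I_n}) :
  P \in [set A; ~:A] -> Q \in [set B; ~:B] -> r <= #|P :&: Q| ->
  P :|: Q \in cl r [set A; B].
Proof.
move=> hP hQ hr; rewrite inE; apply/forallP => E; apply/implyP => /andP[hK hsub].
case/and3P: hK => _ /forallP h1 /forallP h2.
have hA : A \in E by apply: (subsetP hsub); rewrite !inE eqxx.
have hB : B \in E by apply: (subsetP hsub); rewrite !inE eqxx orbT.
have hPE : P \in E.
  case/set2P: hP => ->; first by [].
  by move: (h1 A); rewrite hA.
have hQE : Q \in E.
  case/set2P: hQ => ->; first by [].
  by move: (h1 B); rewrite hB.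
move: (h2 P); rewrite hPE /= => /forallP /(_ Q); rewrite hQE /=.
by rewrite hr.
Qed.

Lemma cl0_char n r (A B U : {set 'I_n}) :
  U \in cl0 r [set A; B] ->
  [|| #|U| <= r, #|~: U| <= r | U \in [set A; B; ~:A; ~:B]].
Proof.
pose E0 := [set X : {set 'I_n} | [|| #|X| <= r, #|~: X| <= r | X \in [set A; B; ~:A; ~:B]]].
rewrite inE => /forallP /(_ E0) /implyP H.
have : U \in E0.
  apply: H; apply/andP; split.
    apply/andP; split.
      by apply/forallP => X; apply/implyP => hX; rewrite inE hX.
    apply/forallP => X; apply/implyP; rewrite [X \in E0]inE [~: X \in E0]inE setCK.
    case/or3P=> [->|->|]; rewrite ?orbT //.
    by move/in4 => [] ->; rewrite !inE ?setCK eqxx ?orbT.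
  by apply/subsetP => X; rewrite !inE => /orP[] ->; rewrite ?orbT.
by rewrite inE.
Qed.

Lemma Glem n r (A B P Q : {set 'I_n}) :
  orthogonal r A B -> P \in [set A; ~:A] -> Q \in [set B; ~:B] -> r <= #|P :&: Q| ->
  [\/ #|~:P :&: ~:Q| <= r, P \subset Q | Q \subset P].
Proof.
move=> hor hP hQ hr.
have := union_in_cl hP hQ hr; rewrite hor => /cl0_char.
have hU : P :|: Q \in [set P; Q; ~:P; ~:Q] ->
   [\/ #|~:P :&: ~:Q| <= r, P \subset Q | Q \subset P].
  case/in4 => e.
  - by apply: Or33; rewrite -e subsetUr.
  - by apply: Or32; rewrite -e subsetUl.
  - apply: Or32; apply/subsetP => x xP.
    have : x \in P :|: Q by rewrite inE xP.
    by rewrite e inE xP.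
  - apply: Or33; apply/subsetP => x xQ.
    have : x \in P :|: Q by rewrite inE xQ orbT.
    by rewrite e inE xQ.
case/or3P.
- move=> hu; apply: Or32.
  have e : P :&: Q == P :|: Q.
    rewrite eqEcard (leq_trans hu hr) andbT.
    by apply/subsetP => x; rewrite !inE => /andP[->].
  apply/subsetP => x xP.
  have : x \in P :|: Q by rewrite inE xP.
  by rewrite -(eqP e) inE => /andP[].
- by rewrite setCU => h; apply: Or31.
- move=> hin; apply: hU.
  move: hP hQ; rewrite !inE.
  by case/in4: hin => -> /orP[] /eqP -> /orP[] /eqP ->; rewrite ?setCK eqxx ?orbT.
Qed.

Lemma core n r (A B X Y : {set 'I_n}) (x0 : 'I_n) : 4*r < n -> orthogonal r A B ->
  X \in [set A; ~:A] -> Y \in [set B; ~:B] -> #|X| = #|Y| -> 2*#|X| <= n ->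
  r <= #|X :&: Y| -> (x0 \in X) = (x0 \in Y) -> X = Y.
Proof.
move=> hn hor hX hY hXY h2 hr hx0.
have hY' : ~:Y \in [set B; ~:B].
  by move: hY; rewrite !inE => /orP[]/eqP->; rewrite ?setCK eqxx ?orbT.
have e1 := cardsID Y X; rewrite setDE in e1.
have e2 := cardsID X Y; rewrite setDE [Y :&: X]setIC [Y :&: ~:X]setIC in e2.
have e3 := cardsID Y (~:X); rewrite setDE in e3.
have e4 := cardsC X; rewrite card_ord in e4.
have [hd|sXY|sYX] := Glem hor hX hY hr; last first.
- by apply/esym/eqP; rewrite eqEcard sYX hXY leqnn.
- by apply/eqP; rewrite eqEcard sXY hXY leqnn.
case: r hn hor hr hd => [|r] hn hor hr hd.
  case hx: (x0 \in X).
    have : #|[set x0]| <= #|X :&: Y|.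
      by apply: subset_leq_card; rewrite sub1set inE hx -hx0 hx.
    rewrite cards1; lia.
  have : #|[set x0]| <= #|~:X :&: ~:Y|.
    by apply: subset_leq_card; rewrite sub1set !inE hx -hx0 hx.
  rewrite cards1; lia.
case: (leqP r.+1 #|X :&: ~:Y|) => hb; last by lia.
have [hc|sX|sY] := Glem hor hX hY' hb.
- rewrite setCK in hc. lia.
- have : #|X :&: Y| <= #|~:Y :&: Y| by apply: subset_leq_card; apply: setSI.
  rewrite [~:Y :&: Y]setIC setICr cards0; lia.
- have : #|~:X :&: ~:Y| <= #|~:X :&: X| by apply: subset_leq_card; apply: setIS.
  rewrite [~:X :&: X]setIC setICr cards0; lia.
Qed.

Definition enc n r (S : {set 'I_n}) : {ffun 'I_r -> option 'I_n} :=
  [ffun i : 'I_r => nth None [seq Some x | x <- enum S] i].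
Definition dec n r (f : {ffun 'I_r -> option 'I_n}) : {set 'I_n} :=
  [set x | Some x \in codom f].

Lemma decK n r (S : {set 'I_n}) : #|S| <= r -> dec (enc r S) = S.
Proof.
move=> hS; apply/setP => x; rewrite inE; apply/idP/idP.
  case/codomP => i; rewrite ffunE.
  case: (ltnP i (size (enum S))) => hi.
    by rewrite (nth_map x) // => -[->]; rewrite -mem_enum mem_nth.
  by rewrite nth_default // size_map.
move=> xS.
have hi0 : index x (enum S) < size (enum S) by rewrite index_mem mem_enum.
have hi : index x (enum S) < r by rewrite (leq_trans hi0) // -cardE.
apply/codomP; exists (Ordinal hi); rewrite ffunE /= (nth_map x) //.
by rewrite nth_index // mem_enum.
Qed.

Definition Ast n (A : {set 'I_n}) := if 2 * #|A| <= n then A else ~: A.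
Definition Sel n r (A : {set 'I_n}) := [set x in take r (enum (Ast A))].

Lemma card_Sel n r (A : {set 'I_n}) : #|Sel r A| = minn r #|Ast A|.
Proof.
rewrite /Sel cardsE; move/card_uniqP: (take_uniq r (enum_uniq (mem (Ast A)))) => ->.
rewrite size_take -cardE /minn; case: ifP => //.
Qed.

Lemma Ast_in n (A B : {set 'I_n}) : Ast A \in [set A; ~:A].
Proof. by rewrite /Ast; case: ifP; rewrite !inE eqxx ?orbT. Qed.

Lemma key_inj n r (H : {set {set 'I_n}}) (x0 : 'I_n) : 4 * r < n -> cross_free r H ->
  {in H &, injective (fun A => (enc r (Sel r A), (inord #|A| : 'I_n.+1), x0 \in A))}.
Proof.
move=> hn hcf A B hA hB [e1 e2 e3].
have eS : Sel r A = Sel r B.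
  rewrite -(decK (S := Sel r A) (leq_trans (_ : _ <= minn r #|Ast A|) (geq_minl _ _))); last by rewrite card_Sel.
  by rewrite e1 decK // card_Sel geq_minl.
have eAB : #|A| = #|B|.
  have lt : forall C : {set 'I_n}, #|C| < n.+1 by move=> C; rewrite ltnS; have := max_card C; rewrite card_ord.
  by have := congr1 val e2; rewrite /= !inordK.
case: (eqVneq A B) => // hne.
have hor := hcf A B hA hB hne.
have cA := cardsC A; have cB := cardsC B; rewrite card_ord in cA cB.
have eXY : Ast A = Ast B.
  have cX : #|Ast A| = #|Ast B| by rewrite /Ast eAB; case: ifP => _ //; lia.
  case: (leqP #|Ast A| r) => hk.
    move: eS; rewrite /Sel !take_oversize ?set_enum // -cardE //; lia.
  apply: (core (x0 := x0) hn hor (Ast_in A A) (Ast_in B B) cX).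
  - by rewrite /Ast; case: ifP => h; lia.
  - have -> : r = #|Sel r A| by rewrite card_Sel; lia.
    apply: subset_leq_card; apply/subsetP => x hx; rewrite inE.
    have hxA : x \in Ast A by move: hx; rewrite inE => /mem_take; rewrite mem_enum.
    have hxB : x \in Ast B by move: hx; rewrite eS inE => /mem_take; rewrite mem_enum.
    by rewrite hxA hxB.
  - by rewrite /Ast eAB; case: ifP => _ //; rewrite !inE e3.
move: eXY; rewrite /Ast eAB; case: ifP => _ //.
by move=> e; move: hne; rewrite -(setCK A) e setCK eqxx.
Qed.

Theorem theorem2 (r : nat) :
  exists C : nat, 0 < C /\
    forall (n : nat) (H : {set {set 'I_n}}),
      0 < n -> cross_free r H -> #|H| <= C * n ^ r.+1.
Proof.
exists (2 ^ (4 * r + 2)); split; first by rewrite expn_gt0.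
move=> n H hn hcf.
have hpos : 0 < n ^ r.+1 by rewrite expn_gt0 hn.
case: (leqP n (4 * r)) => hsmall.
  have h1 : #|H| <= 2 ^ n.
    have := card_powerset [set: 'I_n]; rewrite cardsT card_ord => <-.
    by apply: subset_leq_card; apply/subsetP => X _; rewrite powersetE subsetT.
  apply: (leq_trans h1); apply: (leq_trans (_ : _ <= 2 ^ (4 * r + 2))).
    by rewrite leq_pexp2l //; lia.
  by rewrite leq_pmulr.
pose x0 : 'I_n := Ordinal hn.
have inj := key_inj (x0 := x0) hsmall hcf.
rewrite -(card_in_imset inj).
apply: (leq_trans (max_card _)).
rewrite !card_prod card_ffun card_option !card_ord card_bool.
rewrite -expnSr.
have h2 : n.+1 ^ r.+1 <= (2 * n) ^ r.+1 by rewrite leq_exp2r //; lia.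
rewrite expnMn in h2.
apply: (leq_trans (leq_mul h2 (leqnn 2))).
rewrite mulnC mulnA -expnS leq_mul2r.
by rewrite leq_pexp2l ?orbT //; lia.
Qed.
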